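(* Let $n\ge1$, $m=2^n$, let $\mathcal{B}$ be the boolean algebra of rank $r\ge1$, and let $A\subsetneq\{0,1\}^n$ with $a=|A|$. If $m-a\le r$, then the solution set $Y=V_{\mathcal{B}}(S_A)$ of the orthogonal system $S_A$ is irreducible over $\mathcal{B}$.
   Context: A finite boolean algebra of rank $r$ is (isomorphic to) the power set algebra of an $r$-element set, in the language $\{\vee,\cdot,\bar{\ },0,1\}$. Orthogonal variables: $Z=\{z_\alpha:\alpha\in\{0,1\}^n\}$, $|Z|=m=2^n$. For $A\subseteq\{0,1\}^n$ the orthogonal system is $$S_A=\{z_\alpha=0\mid\alpha\in A\}\cup\{z_\alpha z_\beta=0\mid \alpha\ne\beta\}\cup\{\textstyle\bigvee_{\alpha}z_\alpha=1\}.$$ $V_{\mathcal{B}}(S)\subseteq\mathcal{B}^m$ is the solution set of $S$. A subset of $\mathcal{B}^m$ is algebraic if it is the solution set of some system of equations $t=s$ ($t,s$ terms in $Z$). A nonempty algebraic set is irreducible if it is not a finite union of proper algebraic subsets. *)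

(* Defs.v *)
From HB Require Import structures.
From mathcomp Require Import all_boot.
Set Implicit Arguments. Unset Strict Implicit. Unset Printing Implicit Defensive.

Inductive term (V : Type) : Type :=
| TVar  of V
| TJoin of term V & term V
| TMeet of term V & term V
| TCompl of term V
| TZero
| TOne.
Arguments TZero {V}.
Arguments TOne {V}.

(* The boolean algebra of rank r: the power-set algebra of an r-element set,
   represented as {set 'I_r}. *)
Definition BA (r : nat) := {set 'I_r}.

(* Points of B^Z: assignments of elements of B to the variables. *)
Definition point (V : finType) (r : nat) := {ffun V -> {set 'I_r}}.

Fixpoint eval (V : finType) (r : nat) (p : point V r) (t : term V) : {set 'I_r} :=
  match t with
  | TVar v => p v
  | TJoin t1 t2 => eval p t1 :|: eval p t2
  | TMeet t1 t2 => eval p t1 :&: eval p t2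
  | TCompl t1 => ~: eval p t1
  | TZero => set0
  | TOne => setT
  end.

Definition equation (V : Type) := (term V * term V)%type.
Definition system (V : Type) := equation V -> Prop.

Definition pset (V : finType) (r : nat) := point V r -> Prop.
Definition pset_eq (V : finType) (r : nat) (X Y : pset V r) : Prop :=
  forall p, X p <-> Y p.
Definition pset_sub (V : finType) (r : nat) (X Y : pset V r) : Prop :=
  forall p, X p -> Y p.
Definition pset_proper (V : finType) (r : nat) (X Y : pset V r) : Prop :=
  pset_sub X Y /\ ~ pset_eq X Y.
Definition pset_nonempty (V : finType) (r : nat) (Y : pset V r) : Prop :=
  exists p, Y p.
Definition pset_bigcup (V : finType) (r k : nat) (F : 'I_k -> pset V r) : pset V r :=
  fun p => exists i, F i p.

Definition solset (V : finType) (r : nat) (S : system V) : pset V r :=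
  fun p => forall e, S e -> eval p e.1 = eval p e.2.

Definition algebraic (V : finType) (r : nat) (Y : pset V r) : Prop :=
  exists S : system V, pset_eq Y (solset S).

Definition irreducible (V : finType) (r : nat) (Y : pset V r) : Prop :=
  algebraic Y /\ pset_nonempty Y /\
  forall (k : nat) (F : 'I_k -> pset V r),
    (forall i, algebraic (F i) /\ pset_proper (F i) Y) ->
    ~ pset_eq (pset_bigcup F) Y.

(* Index set {0,1}^n of the orthogonal variables z_alpha. *)
Definition cube (n : nat) := {ffun 'I_n -> bool}.

Definition join_all (V : finType) : term V :=
  foldr (fun v t => TJoin (TVar v) t) TZero (enum V).

Definition orth_system (n : nat) (A : {set cube n}) : system (cube n) :=
  fun e =>
    (exists2 al, al \in A & e = (TVar al, TZero)) \/
    (exists al be, al != be /\ e = (TMeet (TVar al) (TVar be), TZero)) \/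
    e = (join_all (cube n), TOne).

(* Main.v *)
Require Import Defs.
From mathcomp Require Import all_boot.
From mathcomp Require Import zify.
From Stdlib Require Import Classical.

Lemma eval_col (V : finType) (r r' : nat) (p : point V r) (p' : point V r') i j :
  (forall v, (i \in p v) = (j \in p' v)) ->
  forall t, (i \in eval p t) = (j \in eval p' t).
Proof.
move=> H; elim=> /=.
- exact: H.
- by move=> t1 IH1 t2 IH2; rewrite !in_setU IH1 IH2.
- by move=> t1 IH1 t2 IH2; rewrite !in_setI IH1 IH2.
- by move=> t1 IH1; rewrite !in_setC IH1.
- by rewrite !in_set0.
- by rewrite !in_setT.
Qed.

Lemma eval_foldr (V : finType) (r : nat) (p : point V r) i (l : seq V) :
  (i \in eval p (foldr (fun v t => TJoin (TVar v) t) TZero l)) =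
  has (fun v => i \in p v) l.
Proof. by elim: l => [|v l IH] /=; rewrite ?in_set0 // in_setU IH. Qed.

Lemma eval_join_all (V : finType) (r : nat) (p : point V r) i :
  (i \in eval p (join_all V)) = [exists v, i \in p v].
Proof.
rewrite /join_all eval_foldr; apply/hasP/existsP => [[v _ H]|[v H]].
  by exists v.
by exists v; rewrite ?mem_enum.
Qed.

Theorem lemma1 (n r : nat) (A : {set cube n}) :
  (1 <= n)%N -> (1 <= r)%N ->
  A \proper [set: cube n] ->
  (2 ^ n - #|A| <= r)%N ->
  irreducible (@solset (cube n) r (orth_system A)).
Proof.
move=> _ _ /properP [_ [a0 _ a0A]] hk.
set s := enum (~: A).
have hs : (size s <= r)%N.
  have := cardsC A; rewrite card_ffun card_bool card_ord -cardE => ?; lia.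
have a0s : a0 \in s by rewrite mem_enum inE.
have solA : forall p : point (cube n) r, solset (orth_system A) p ->
    forall al, al \in A -> p al = set0.
  move=> p Hp al hal; have := Hp (TVar al, TZero); apply.
  by left; exists al.
have solD : forall p : point (cube n) r, solset (orth_system A) p ->
    forall al be, al != be -> p al :&: p be = set0.
  move=> p Hp al be hab; have := Hp (TMeet (TVar al) (TVar be), TZero); apply.
  by right; left; exists al, be.
have solJ : forall p : point (cube n) r, solset (orth_system A) p ->
    eval p (join_all (cube n)) = setT.
  move=> p Hp; have := Hp (join_all (cube n), TOne); apply.
  by right; right.
pose g (j : 'I_r) := nth a0 s j.
have gA : forall j, g j \in s.
  by move=> j; rewrite /g; case: (ltnP j (size s)) => h; [rewrite mem_nth | rewrite nth_default].
pose ps : point (cube n) r := [ffun v => [set j | g j == v]].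
have psY : solset (orth_system A) ps.
  move=> e [[al hal ->]|[[al [be [hab ->]]]|->]] /=.
  - apply/setP => j; rewrite ffunE !inE; apply/negbTE/eqP => hg.
    by have := gA j; rewrite hg mem_enum inE hal.
  - apply/setP => j; rewrite !ffunE !inE; apply/negbTE/andP => [[/eqP h1 /eqP h2]].
    by move: hab; rewrite -h1 -h2 eqxx.
  - apply/setP => j; rewrite eval_join_all inE; apply/existsP; exists (g j).
    by rewrite ffunE inE.
(* every column of a solution occurs as a column of ps *)
have colP : forall p : point (cube n) r, solset (orth_system A) p ->
    forall i : 'I_r, exists j : 'I_r, forall v, (i \in p v) = (j \in ps v).
  move=> p Hp i.
  have : i \in eval p (join_all (cube n)) by rewrite solJ // inE.
  rewrite eval_join_all => /existsP [be hbe].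
  have beA : be \notin A.
    by apply/negP => hA; move: hbe; rewrite solA // inE.
  have bes : be \in s by rewrite mem_enum inE.
  have hj : (index be s < r)%N by apply: leq_trans hs; rewrite index_mem.
  exists (Ordinal hj) => v; rewrite ffunE inE /g /= nth_index //.
  case: (eqVneq be v) => [<-|hne]; first by rewrite hbe.
  apply/negP => hv; have := solD p Hp be v hne.
  by move/setP/(_ i); rewrite inE hbe hv inE.
split; first by exists (orth_system A).
split; first by exists ps.
move=> k F HF Heq.
have [i Fi] := (proj2 (Heq ps) psY).
have [[S HS] [Hsub Hne]] := HF i.
have [p Hp] : exists p, ~ (F i p <-> solset (orth_system A) p).
  by apply: not_all_ex_not.
have Yp : solset (orth_system A) p.
  by apply: NNPP => hY; apply: Hp; split => // /Hsub.
have nSp : ~ solset S p by move=> /HS hF; apply: Hp; split.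
have [e He] : exists e, ~ (S e -> eval p e.1 = eval p e.2).
  by apply: not_all_ex_not.
have Se : S e by apply: NNPP => h; apply: He => /h.
have hne : eval p e.1 <> eval p e.2 by move=> h; apply: He.
have [a ha] : exists a, (a \in eval p e.1) != (a \in eval p e.2).
  apply: NNPP => h; apply: hne; apply/setP => a.
  by apply/eqP; apply: NNPP => h'; apply: h; exists a; apply/negP.
have [j hj] := colP p Yp a.
have := proj1 (HS ps) Fi e Se => /setP/(_ j).
by rewrite -(@eval_col _ _ _ p ps a j hj e.1) -(@eval_col _ _ _ p ps a j hj e.2) => h; move: ha; rewrite h eqxx.
Qed.
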